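(* Let $0\le i\le m\le n$ and let $\Delta_\succ$ be the reverse lexicographic triangulation of the point configuration $\mathcal P(m,n)=\{e_a\oplus f_b:1\le a\le m,\,1\le b\le n\}\subset\mathbb R^m\oplus\mathbb R^n$ with respect to a total order of the points (identified with variables $x_{ab}\leftrightarrow e_a\oplus f_b$) in which $x_{11}\prec x_{22}\prec\cdots\prec x_{ii}$ and all remaining variables are larger than $x_{ii}$ and ordered arbitrarily among themselves. Then $x_{11},\dots,x_{ii}$ are cone points of $\Delta_\succ$. Moreover, if $i=m>1$, the simplicial complex obtained from $\Delta_\succ$ by removing $x_{11},\dots,x_{mm}$ is $\operatorname{core}(\Delta_\succ)$.
   Context: $e_a$, $f_b$ are standard unit vectors of $\mathbb R^m$, $\mathbb R^n$. Reverse lexicographic triangulation of a point configuration $\mathcal A=\{a_1\succ a_2\succ\cdots\succ a_N\}$: if $F_1,\dots,F_k$ are the facets of $\operatorname{conv}(\mathcal A)$ not containing $a_N$, then $\Delta_\succ(\mathcal A)$ has as maximal simplices the sets $G\cup\{a_N\}$ with $G$ a maximal simplex of $\Delta_\succ(\mathcal A\cap F_i)$ for some $i$ (recursively, with the induced order). A cone point of a simplicial complex is a vertex lying in every facet; $\operatorname{core}(\Delta)$ is the restriction of $\Delta$ to the vertices that are not cone points. *)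

(* Defs.v *)
From HB Require Import structures.
From mathcomp Require Import all_boot all_order all_algebra.
From mathcomp Require Import reals.
Set Implicit Arguments. Unset Strict Implicit. Unset Printing Implicit Defensive.
Import Order.TTheory GRing.Theory Num.Theory.
Local Open Scope ring_scope.

Section PointConfig.
Variables (R : realType) (d : nat) (I : finType) (pt : I -> 'rV[R]_d).

(* F is a face of conv(pt @ A), recorded as the set of points of A lying
   on it: there is a linear functional w and a constant c with
   w . a >= c on A, and equality exactly on F. (The empty face is allowed.) *)
Definition is_face (A F : {set I}) : Prop :=
  F \subset A /\
  exists (w : 'cV[R]_d) (c : R),
    (forall a, a \in A -> c <= (pt a *m w) 0 0) /\
    (forall a, a \in A -> ((pt a *m w) 0 0 = c <-> a \in F)).

(* homogenized point matrix: rows (1, pt a), a in A; its rank is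
   (affine dimension of conv(pt @ A)) + 1 *)
Definition homog (A : {set I}) : 'M[R]_(#|A|, 1 + d) :=
  \matrix_(k < #|A|) row_mx (1 : 'M[R]_1) (pt (@enum_val I (mem A) k)).

Definition affrank (A : {set I}) : nat := \rank (homog A).

Definition is_facet (A F : {set I}) : Prop :=
  is_face A F /\ (affrank F).+1 = affrank A.

(* revlex A G : G is a maximal simplex of the reverse lexicographic
   triangulation of the configuration A, for the order x < y iff
   ord x < ord y (ord injective).  The last point a_N is the ord-smallest
   point of A. *)
Inductive revlex (ord : I -> nat) : {set I} -> {set I} -> Prop :=
| revlex_nil : revlex ord set0 set0
| revlex_cons (A F G : {set I}) (x : I) :
    x \in A -> (forall y, y \in A -> (ord x <= ord y)%N) ->
    is_facet A F -> x \notin F -> revlex ord F G ->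
    revlex ord A (x |: G).

End PointConfig.

(* Simplicial complexes on a finite vertex type, given by their facets
   (maximal simplices). *)
Section Complexes.
Variable I : finType.
Definition complex := {set I} -> Prop.

Definition faces (D : complex) (t : {set I}) : Prop :=
  exists2 s, D s & t \subset s.

Definition vertex (D : complex) (v : I) : Prop := exists2 s, D s & v \in s.

Definition cone_point (D : complex) (v : I) : Prop :=
  vertex D v /\ forall s, D s -> v \in s.

Definition core (D : complex) (t : {set I}) : Prop :=
  faces D t /\ forall v, v \in t -> vertex D v /\ ~ cone_point D v.

Definition delete (D : complex) (X : {set I}) (t : {set I}) : Prop :=
  faces D t /\ [disjoint t & X].
End Complexes.

(* The configuration P(m,n) = { e_a (+) f_b } in R^m (+) R^n, indexed by
   'I_m * 'I_n (0-based: (a,b) stands for x_{a+1,b+1}). *)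
Definition Pmn (R : realType) (m n : nat) (p : ('I_m * 'I_n)%type) : 'rV[R]_(m + n) :=
  row_mx (delta_mx 0 p.1) (delta_mx 0 p.2).

Definition revlex_Pmn (R : realType) (m n : nat) (ord : ('I_m * 'I_n)%type -> nat)
  : complex ('I_m * 'I_n)%type :=
  revlex (@Pmn R m n) ord [set: 'I_m * 'I_n].

Definition isdiag (m n i : nat) (p : ('I_m * 'I_n)%type) : bool :=
  ((p.1 : nat) == (p.2 : nat)) && (p.1 < i)%N.

(* Main.v *)
Require Import Defs.
From HB Require Import structures.
From mathcomp Require Import all_boot all_order all_algebra.
From mathcomp Require Import reals.
From mathcomp Require Import zify lra.
Set Implicit Arguments. Unset Strict Implicit. Unset Printing Implicit Defensive.
Import Order.TTheory GRing.Theory Num.Theory.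
Local Open Scope ring_scope.

Section Gen.
Variables (R : realType) (d : nat) (I : finType) (pt : I -> 'rV[R]_d).

Definition hv (p : I) : 'rV[R]_(1 + d) := row_mx (1 : 'M[R]_1) (pt p).

Lemma row_homog (A : {set I}) k : row k (homog pt A) = hv (enum_val k).
Proof. by rewrite rowK. Qed.

Lemma homog_subP (A : {set I}) (k : nat) (M : 'M[R]_(k, 1 + d)) :
  (forall a, a \in A -> (hv a <= M)%MS) -> (homog pt A <= M)%MS.
Proof. by move=> H; apply/row_subP => j; rewrite row_homog; apply: H; apply: enum_valP. Qed.

Lemma hv_sub (A : {set I}) a : a \in A -> (hv a <= homog pt A)%MS.
Proof.
by move=> Ha; have := row_sub (enum_rank_in Ha a) (homog pt A); rewrite row_homog enum_rankK_in.
Qed.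

Lemma affrank_eq (A B : {set I}) :
  (forall a, a \in A -> (hv a <= homog pt B)%MS) ->
  (forall b, b \in B -> (hv b <= homog pt A)%MS) -> affrank pt A = affrank pt B.
Proof.
move=> HA HB; apply/eqP; rewrite /affrank eqn_leq !mxrankS //; exact: homog_subP.
Qed.

Lemma affrank0 : affrank pt set0 = 0%N.
Proof.
apply/eqP; rewrite -leqn0; apply: (leq_trans (rank_leq_row _)); by rewrite cards0.
Qed.

Lemma entry11 (M : 'M[R]_1) : M = 0 <-> M 0 0 = 0.
Proof.
split => [->|H]; first by rewrite mxE.
by apply/matrixP => i j; rewrite !ord1 H mxE.
Qed.

Lemma affrank_add (A : {set I}) p (w : 'cV[R]_(1 + d)) :
  (forall a, a \in A -> (hv a *m w) 0 0 = 0) -> (hv p *m w) 0 0 != 0 ->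
  affrank pt (p |: A) = (affrank pt A).+1.
Proof.
move=> HA Hp.
have HAw : homog pt A *m w = 0.
  apply/row_matrixP => k; rewrite row_mul row_homog row0; apply/entry11.
  by apply: HA; apply: enum_valP.
have Hnot : ~~ (hv p <= homog pt A)%MS.
  by apply/negP => /submxP [D HD]; move: Hp; rewrite HD -mulmxA HAw mulmx0 mxE eqxx.
have Hp0 : hv p != 0 by apply: contraNneq Hp => ->; rewrite mul0mx mxE.
have -> : affrank pt (p |: A) = \rank (homog pt A + hv p)%MS.
  apply/eqP; rewrite /affrank eqn_leq; apply/andP; split; apply: mxrankS.
    apply: homog_subP => a; rewrite in_setU1 => /orP [/eqP->|Ha].
      exact: addsmxSr.
    exact: submx_trans (hv_sub Ha) (addsmxSl _ _).
  rewrite addsmx_sub hv_sub ?setU11 // andbT.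
  by apply: homog_subP => a Ha; apply: hv_sub; rewrite in_setU1 Ha orbT.
rewrite mxrank_disjoint_sum ?rank_rV ?Hp0 ?addn1 //.
apply/eqP; rewrite -mxrank_eq0.
have Hle : (homog pt A :&: hv p <= hv p)%MS by exact: capmxSr.
have := mxrankS Hle; rewrite rank_rV Hp0.
case E: (\rank (homog pt A :&: hv p)) => [|[|k]] // Hk.
exfalso; move/negP: Hnot; apply.
have Heq : (homog pt A :&: hv p == hv p)%MS.
  by rewrite -(mxrank_leqif_eq Hle) rank_rV Hp0 E.
apply: submx_trans (capmxSl (homog pt A) (hv p)).
by move/eqmxP: Heq => ->.
Qed.

Lemma revlex_sub ord A G : revlex pt ord A G -> G \subset A.
Proof.
elim => [|A' F G' x xA _ [[sFA _] _] _ _ IH]; first exact: sub0set.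
by rewrite subUset sub1set xA (subset_trans IH sFA).
Qed.

End Gen.


Section P.
Variables (R : realType) (m n : nat).
Local Notation pt := (@Pmn R m n).
Local Notation v := (hv pt).

Lemma Pmn_sq (a a0 : 'I_m) (b b0 : 'I_n) :
  pt (a, b) + pt (a0, b0) = pt (a, b0) + pt (a0, b).
Proof. by rewrite /Pmn /= !add_row_mx [delta_mx 0 b0 + _]addrC. Qed.

Lemma hv_sq (a a0 : 'I_m) (b b0 : 'I_n) :
  v (a, b) = v (a, b0) + v (a0, b) - v (a0, b0).
Proof.
by apply/eqP; rewrite eq_sym subr_eq /hv /Pmn /= !add_row_mx [delta_mx 0 b0 + _]addrC.
Qed.

Lemma mul_delta_entry k (u : 'rV[R]_k) j : (u *m (delta_mx j (0 : 'I_1) : 'cV[R]_k)) 0 0 = u 0 j.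
Proof. by rewrite -colE mxE. Qed.

Lemma Pmn_l (a r : 'I_m) (b : 'I_n) : pt (a, b) 0 (lshift n r) = (a == r)%:R.
Proof. by rewrite /Pmn row_mxEl mxE /= eq_sym. Qed.

Lemma Pmn_r (a : 'I_m) (b c : 'I_n) : pt (a, b) 0 (rshift m c) = (b == c)%:R.
Proof. by rewrite /Pmn row_mxEr mxE /= eq_sym. Qed.

Lemma hv_0 p : v p 0 (lshift (m + n) 0) = 1.
Proof. by rewrite /hv row_mxEl mxE. Qed.

Lemma hv_r p j : v p 0 (rshift 1 j) = pt p 0 j.
Proof. by rewrite /hv row_mxEr. Qed.

Lemma affrank1 p : affrank pt [set p] = 1%N.
Proof.
rewrite -(setU0 [set p]) (@affrank_add _ _ _ _ _ _ (delta_mx (lshift (m + n) 0) 0)).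
  by rewrite affrank0.
  by move=> a; rewrite in_set0.
by rewrite mul_delta_entry hv_0 oner_neq0.
Qed.

End P.


Section P.
Variables (R : realType) (m n : nat).
Local Notation pt := (@Pmn R m n).
Local Notation v := (hv pt).

Lemma sub_sq (S : {set 'I_m * 'I_n}) a0 b0 a b :
  (a, b0) \in S -> (a0, b) \in S -> (a0, b0) \in S -> (v (a, b) <= homog pt S)%MS.
Proof.
move=> H1 H2 H3; rewrite (@hv_sq R m n a a0 b b0).
by rewrite addmx_sub ?addmx_sub ?eqmx_opp ?hv_sub.
Qed.

Lemma affrankX (Rs : {set 'I_m}) (Cs : {set 'I_n}) r0 c0 :
  r0 \in Rs -> c0 \in Cs -> affrank pt (setX Rs Cs) = (#|Rs| + #|Cs|).-1.
Proof.
move: {2}(#|Rs| + #|Cs|)%N (leqnn (#|Rs| + #|Cs|)) => N.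
elim: N Rs Cs r0 c0 => [|N IH] Rs Cs r0 c0 HN Hr Hc.
  by move: HN; rewrite (cardsD1 r0) Hr.
have eR : #|Rs| = #|Rs :\ r0|.+1 by rewrite (cardsD1 r0) Hr.
have eC : #|Cs| = #|Cs :\ c0|.+1 by rewrite (cardsD1 c0) Hc.
case: (eqVneq (Cs :\ c0) set0) => [E0|/set0Pn [c /setD1P [cc0 cC]]].
  case: (eqVneq (Rs :\ r0) set0) => [F0|/set0Pn [r /setD1P [rr0 rR]]].
    have -> : setX Rs Cs = [set (r0, c0)].
      apply/setP => [[a b]]; rewrite in_setX in_set1 xpair_eqE.
      apply/andP/andP => [[aR bC]|[/eqP -> /eqP ->]]; last by [].
      split; [case: (eqVneq a r0) => // H | case: (eqVneq b c0) => // H]; exfalso.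
        by have := in_set0 a; rewrite -F0 in_setD1 H aR.
      by have := in_set0 b; rewrite -E0 in_setD1 H bC.
    rewrite affrank1 eR eC E0 F0 !cards0 //.
  set R' := Rs :\ r.
  have r0R' : r0 \in R' by rewrite in_setD1 eq_sym rr0.
  have eR' : #|Rs| = #|Rs :\ r|.+1 by rewrite (cardsD1 r) rR.
  have IH' := IH R' Cs r0 c0 _ r0R' Hc.
  have -> : affrank pt (setX Rs Cs) = affrank pt ((r, c0) |: setX R' Cs).
    apply: affrank_eq => [[a b]|q].
      rewrite in_setX => /andP [aR bC].
      have Hs : forall q, q \in setX R' Cs -> q \in (r, c0) |: setX R' Cs.
        by move=> q Hq; rewrite in_setU1 Hq orbT.
      case: (eqVneq a r) => [->|ar].
        apply: (@sub_sq _ r0 c0); first by rewrite setU11.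
          by apply: Hs; rewrite in_setX r0R' bC.
        by apply: Hs; rewrite in_setX r0R' Hc.
      by apply: hv_sub; apply: Hs; rewrite in_setX in_setD1 ar aR bC.
    rewrite in_setU1 => /orP [/eqP ->|]; first by apply: hv_sub; rewrite in_setX rR Hc.
    case: q => a b; rewrite in_setX in_setD1 => /andP [/andP [_ aR] bC].
    by apply: hv_sub; rewrite in_setX aR bC.
  rewrite (@affrank_add _ _ _ _ _ _ (delta_mx (rshift 1 (lshift n r)) 0)).
  - rewrite IH' /R'; first by lia.
    by move: HN; lia.
  - move=> [a b]; rewrite in_setX in_setD1 => /andP [/andP [ar _] _].
    by rewrite mul_delta_entry hv_r Pmn_l (negbTE ar).
  - by rewrite mul_delta_entry hv_r Pmn_l eqxx oner_neq0.
set C' := Cs :\ c.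
have c0C' : c0 \in C' by rewrite in_setD1 eq_sym cc0.
have eC' : #|Cs| = #|Cs :\ c|.+1 by rewrite (cardsD1 c) cC.
have IH' := IH Rs C' r0 c0 _ Hr c0C'.
have -> : affrank pt (setX Rs Cs) = affrank pt ((r0, c) |: setX Rs C').
  apply: affrank_eq => [[a b]|q].
    rewrite in_setX => /andP [aR bC].
    have Hs : forall q, q \in setX Rs C' -> q \in (r0, c) |: setX Rs C'.
      by move=> q Hq; rewrite in_setU1 Hq orbT.
    case: (eqVneq b c) => [->|bc].
      apply: (@sub_sq _ r0 c0).
          by apply: Hs; rewrite in_setX aR c0C'.
        by rewrite setU11.
      by apply: Hs; rewrite in_setX Hr c0C'.
    by apply: hv_sub; apply: Hs; rewrite in_setX in_setD1 bc aR bC.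
  rewrite in_setU1 => /orP [/eqP ->|]; first by apply: hv_sub; rewrite in_setX cC Hr.
  case: q => a b; rewrite in_setX in_setD1 => /andP [aR /andP [_ bC]].
  by apply: hv_sub; rewrite in_setX aR bC.
rewrite (@affrank_add _ _ _ _ _ _ (delta_mx (rshift 1 (rshift m c)) 0)).
- rewrite IH' /C'; first by lia.
  by move: HN; rewrite /C'; lia.
- move=> [a b]; rewrite in_setX in_setD1 => /andP [_ /andP [bc _]].
  by rewrite mul_delta_entry hv_r Pmn_r (negbTE bc).
- by rewrite mul_delta_entry hv_r Pmn_r eqxx oner_neq0.
Qed.

End P.


Section P.
Variables (R : realType) (m n : nat).
Local Notation pt := (@Pmn R m n).
Local Notation v := (hv pt).

Lemma setX0 (Cs : {set 'I_n}) : setX (set0 : {set 'I_m}) Cs = set0.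
Proof. by apply/setP => [[a b]]; rewrite in_setX !in_set0. Qed.

Lemma card_arith1 (r0 c0 r c rk : nat) : (r0 + c0).-1.+1 = (r + c).-1 -> r = rk.+1 ->
  (r0 <= rk)%N -> (c0 <= c)%N -> (0 < r0)%N -> (0 < c0)%N -> (rk <= r0)%N && (c <= c0)%N.
Proof. move=> *; apply/andP; split; lia. Qed.

Lemma card_arith2 (r0 c0 r c ck : nat) : (r0 + c0).-1.+1 = (r + c).-1 -> c = ck.+1 ->
  (r0 <= r)%N -> (c0 <= ck)%N -> (0 < r0)%N -> (0 < c0)%N -> (r <= r0)%N && (ck <= c0)%N.
Proof. move=> *; apply/andP; split; lia. Qed.

Lemma GL (Rs : {set 'I_m}) (Cs : {set 'I_n}) F x :
  x \in setX Rs Cs -> is_facet pt (setX Rs Cs) F -> x \notin F ->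
  F = setX (Rs :\ x.1) Cs \/ F = setX Rs (Cs :\ x.2).
Proof.
case: x => [k l] /=; rewrite in_setX => /andP [kR lC] [[sFA [w [c [Hge Heq]]]] Hrk] xF.
have rA := affrankX R kR lC.
have eR : #|Rs| = #|Rs :\ k|.+1 by rewrite (cardsD1 k) kR.
have eC : #|Cs| = #|Cs :\ l|.+1 by rewrite (cardsD1 l) lC.
case: (eqVneq F set0) => [F0|/set0Pn [[a0 b0] f0F]].
  rewrite F0 affrank0 rA in Hrk.
  have /cards0_eq -> : #|Rs :\ k| = 0%N by lia.
  by left; rewrite F0 setX0.
have := subsetP sFA _ f0F; rewrite in_setX => /andP [a0R b0C].
pose phi q := (pt q *m w) 0 0.
have phiD X Y : ((X + Y) *m w) 0 0 = (X *m w) 0 0 + (Y *m w) 0 0 by rewrite mulmxDl mxE.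
have sq a b : phi (a, b) + phi (a0, b0) = phi (a, b0) + phi (a0, b).
  by rewrite /phi -!phiD Pmn_sq.
have inA a b : a \in Rs -> b \in Cs -> (a, b) \in setX Rs Cs by move=> ? ?; rewrite in_setX; apply/andP.
have ge a b : a \in Rs -> b \in Cs -> c <= phi (a, b) by move=> ? ?; apply: Hge; apply: inA.
have c0 : phi (a0, b0) = c by apply/(Heq _ (inA _ _ a0R b0C)).
set R0 := [set a in Rs | phi (a, b0) == c].
set C0 := [set b in Cs | phi (a0, b) == c].
have FE : F = setX R0 C0.
  apply/setP => [[a b]]; rewrite in_setX !inE.
  apply/idP/idP.
    move=> abF; have := subsetP sFA _ abF; rewrite in_setX => /andP [aR bC].
    have e1 := (Heq _ (inA _ _ aR bC)).2 abF; have s := sq a b.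
    have g1 := ge _ _ aR b0C; have g2 := ge _ _ a0R bC.
    rewrite aR bC /=; apply/andP; split; apply/eqP; rewrite /phi in e1 c0 g1 g2 s *; lra.
  move=> /andP [/andP [aR /eqP e1] /andP [bC /eqP e2]].
  apply/(Heq _ (inA _ _ aR bC)); have s := sq a b; move: s; rewrite e1 e2 c0 /phi; lra.
have a0R0 : a0 \in R0 by rewrite inE a0R c0 eqxx.
have b0C0 : b0 \in C0 by rewrite inE b0C c0 eqxx.
rewrite FE (affrankX R a0R0 b0C0) rA in Hrk.
have sR : R0 \subset Rs by apply/subsetP => a; rewrite inE => /andP [].
have sC : C0 \subset Cs by apply/subsetP => a; rewrite inE => /andP [].
have lR := subset_leq_card sR; have lC' := subset_leq_card sC.
have pR0 : (0 < #|R0|)%N by apply/card_gt0P; exists a0.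
have pC0 : (0 < #|C0|)%N by apply/card_gt0P; exists b0.
clearbody R0 C0.
move: xF; rewrite FE in_setX negb_and => /orP [kR0|lC0].
  have sR' : R0 \subset Rs :\ k.
    by apply/subsetP => a aR0; rewrite in_setD1 (subsetP sR _ aR0) andbT; apply: contraNneq kR0 => <-.
  have lR' := subset_leq_card sR'.
  have /andP [H1 H2] : (#|Rs :\ k| <= #|R0|)%N && (#|Cs| <= #|C0|)%N.
    exact: card_arith1 Hrk eR lR' lC' pR0 pC0.
  left; congr setX; apply/eqP.
    by rewrite eqEcard sR' H1.
  by rewrite eqEcard sC H2.
have sC' : C0 \subset Cs :\ l.
  by apply/subsetP => a aC0; rewrite in_setD1 (subsetP sC _ aC0) andbT; apply: contraNneq lC0 => <-.
have lC'' := subset_leq_card sC'.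
have /andP [H1 H2] : (#|Rs| <= #|R0|)%N && (#|Cs :\ l| <= #|C0|)%N.
  exact: card_arith2 Hrk eC lR lC'' pR0 pC0.
right; congr setX; apply/eqP.
  by rewrite eqEcard sR H1.
by rewrite eqEcard sC' H2.
Qed.

End P.


Section P.
Variables (R : realType) (m n : nat).
Local Notation pt := (@Pmn R m n).
Local Notation v := (hv pt).

Lemma card_pos_pred (T : finType) (A : {set T}) x : x \in A -> (#|A| = #|A :\ x|.+1)%N.
Proof. by move=> H; rewrite (cardsD1 x) H. Qed.

Lemma facet_row (Rs : {set 'I_m}) (Cs : {set 'I_n}) r r' c0 :
  r \in Rs -> r' \in Rs -> r' != r -> c0 \in Cs ->
  is_facet pt (setX Rs Cs) (setX (Rs :\ r) Cs).
Proof.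
move=> rR r'R r'r c0C; split; first split.
- by apply/subsetP => [[a b]]; rewrite !in_setX in_setD1 => /andP [/andP [_ ->] ->].
- exists (delta_mx (lshift n r) 0), 0; split.
    by move=> [a b] _; rewrite mul_delta_entry Pmn_l ler0n.
  move=> [a b]; rewrite !in_setX in_setD1 mul_delta_entry Pmn_l => /andP [aR bC].
  rewrite aR bC !andbT; case: (eqVneq a r) => _ /=; split => //.
  by move/eqP; rewrite oner_eq0.
have r'R' : r' \in Rs :\ r by rewrite in_setD1 r'r.
rewrite (affrankX R r'R' c0C) (affrankX R rR c0C) (card_pos_pred rR).
have := card_pos_pred r'R'; move=> -> /=; by rewrite addSn.
Qed.

Lemma facet_col (Rs : {set 'I_m}) (Cs : {set 'I_n}) c c' r0 :
  c \in Cs -> c' \in Cs -> c' != c -> r0 \in Rs ->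
  is_facet pt (setX Rs Cs) (setX Rs (Cs :\ c)).
Proof.
move=> cC c'C c'c r0R; split; first split.
- by apply/subsetP => [[a b]]; rewrite !in_setX in_setD1 => /andP [-> /andP [_ ->]].
- exists (delta_mx (rshift m c) 0), 0; split.
    by move=> [a b] _; rewrite mul_delta_entry Pmn_r ler0n.
  move=> [a b]; rewrite !in_setX in_setD1 mul_delta_entry Pmn_r => /andP [aR bC].
  rewrite aR bC !andbT; case: (eqVneq b c) => _ /=; split => //.
  by move/eqP; rewrite oner_eq0.
have c'C' : c' \in Cs :\ c by rewrite in_setD1 c'c.
rewrite (affrankX R r0R c'C') (affrankX R r0R cC) (card_pos_pred cC).
have := card_pos_pred c'C'; move=> -> /=; by rewrite !addnS.
Qed.

Lemma facet_pt p : is_facet pt [set p] set0.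
Proof.
split; first split; first exact: sub0set.
  exists 0, (-1); split.
    by move=> a _; rewrite mulmx0 mxE lerN10.
  move=> a _; rewrite mulmx0 mxE in_set0; split => // /eqP.
  by rewrite eq_sym oppr_eq0 oner_eq0.
by rewrite affrank0 affrank1.
Qed.

Lemma setX_single (Rs : {set 'I_m}) (Cs : {set 'I_n}) r0 c0 :
  r0 \in Rs -> c0 \in Cs -> Rs :\ r0 = set0 -> Cs :\ c0 = set0 ->
  setX Rs Cs = [set (r0, c0)].
Proof.
move=> Hr Hc F0 E0.
apply/setP => [[a b]]; rewrite in_setX in_set1 xpair_eqE.
apply/andP/andP => [[aR bC]|[/eqP -> /eqP ->]]; last by [].
split; [case: (eqVneq a r0) => // H | case: (eqVneq b c0) => // H]; exfalso.
  by have := in_set0 a; rewrite -F0 in_setD1 H aR.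
by have := in_set0 b; rewrite -E0 in_setD1 H bC.
Qed.

Lemma exists_revlex ord N (Rs : {set 'I_m}) (Cs : {set 'I_n}) :
  (#|Rs| + #|Cs| <= N)%N -> exists G, revlex pt ord (setX Rs Cs) G.
Proof.
elim: N Rs Cs => [|N IH] Rs Cs HN.
  have /cards0_eq -> : #|Rs| = 0%N by lia.
  by rewrite setX0; exists set0; constructor.
case: (eqVneq (setX Rs Cs) set0) => [->|/set0Pn [x0 x0A]].
  by exists set0; constructor.
case: (arg_minnP ord x0A) => [[a b] yA ymin].
have : (a, b) \in setX Rs Cs := yA; rewrite in_setX => /andP [aR bC].
case: (eqVneq (Rs :\ a) set0) => [F0|/set0Pn [r' /setD1P [r'a r'R]]].
  case: (eqVneq (Cs :\ b) set0) => [E0|/set0Pn [c' /setD1P [c'b c'C]]].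
    exists [set (a, b)]; rewrite -(setU0 [set (a, b)]).
    apply: (revlex_cons (F := set0)).
    - exact: yA.
    - by move=> y Hy; apply: ymin.
    - by rewrite (setX_single aR bC F0 E0); apply: facet_pt.
    - by rewrite in_set0.
    - by constructor.
  have [G HG] : exists G, revlex pt ord (setX Rs (Cs :\ b)) G.
    by apply: IH; move: HN; rewrite (card_pos_pred bC) addnS ltnS.
  exists ((a, b) |: G); apply: (revlex_cons (F := setX Rs (Cs :\ b))).
  - exact: yA.
  - by move=> y Hy; apply: ymin.
  - exact: facet_col c'C c'b aR.
  - by rewrite in_setX in_setD1 eqxx andbF.
  - exact: HG.
have [G HG] : exists G, revlex pt ord (setX (Rs :\ a) Cs) G.
  by apply: IH; move: HN; rewrite (card_pos_pred aR) addSn ltnS.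
exists ((a, b) |: G); apply: (revlex_cons (F := setX (Rs :\ a) Cs)).
- exact: yA.
- by move=> y Hy; apply: ymin.
- exact: facet_row r'R r'a bC.
- by rewrite in_setX in_setD1 eqxx.
- exact: HG.
Qed.

End P.


Section P.
Variables (R : realType) (m n i : nat) (ord : 'I_m * 'I_n -> nat).
Hypothesis him : (i <= m)%N.
Hypothesis hmn : (m <= n)%N.
Hypothesis Hdd : forall p q, isdiag i p -> isdiag i q -> (p.1 < q.1)%N -> (ord p < ord q)%N.
Hypothesis Hdn : forall p q, isdiag i p -> ~~ isdiag i q -> (ord p < ord q)%N.
Local Notation pt := (@Pmn R m n).

Lemma diag_eq (p q : 'I_m * 'I_n) : isdiag i p -> isdiag i q -> (p.1 : nat) = q.1 -> p = q.
Proof.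
case: p q => [a b] [c d]; rewrite /isdiag /= => /andP [/eqP e1 _] /andP [/eqP e2 _] e.
by congr pair; apply: val_inj => //=; rewrite -e1 -e2.
Qed.

Lemma diag_min (A : {set 'I_m * 'I_n}) k (pk : 'I_m * 'I_n) x :
  isdiag i pk -> (pk.1 : nat) = k -> pk \in A -> x \in A ->
  (forall q, isdiag i q -> (q.1 < k)%N -> q \notin A) ->
  (forall y, y \in A -> (ord x <= ord y)%N) -> x = pk.
Proof.
move=> dpk e pkA xA lo xmin.
have := xmin _ pkA; case dx: (isdiag i x).
  case: (ltngtP k x.1) => [lt|gt|eq].
  - by rewrite leqNgt (Hdd dpk dx) // e.
  - by have := lo x dx gt; rewrite xA.
  - by move=> _; apply: diag_eq => //; rewrite e.
by rewrite leqNgt (Hdn dpk) ?dx.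
Qed.

Lemma cone A G : revlex pt ord A G -> forall Rs Cs k, A = setX Rs Cs ->
  (forall q, isdiag i q -> (q.1 < k)%N -> q \notin A) ->
  (forall q, isdiag i q -> (k <= q.1)%N -> q \in A) ->
  forall q, isdiag i q -> (k <= q.1)%N -> q \in G.
Proof.
elim => [|A1 F G1 x xA xmin fF xF _ IH] Rs Cs k eA lo hi q dq kq.
  by have := hi q dq kq; rewrite in_set0.
have ki : (k < i)%N by move: dq => /andP [_ H]; apply: leq_trans H.
have km : (k < m)%N by apply: leq_trans him.
have kn : (k < n)%N by apply: leq_trans hmn.
pose pk : 'I_m * 'I_n := (Ordinal km, Ordinal kn).
have dpk : isdiag i pk by rewrite /isdiag /= eqxx ki.
have pkA := hi pk dpk (leqnn k).
have xpk : x = pk by apply: (diag_min dpk _ pkA xA lo xmin).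
subst x.
case: (eqVneq q pk) => [->|qpk]; first by rewrite setU11.
rewrite in_setU1 (negbTE qpk) /=.
have kq' : (k < q.1)%N.
  rewrite ltn_neqAle kq andbT; apply/negP => /eqP E.
  by move/eqP: qpk; apply; apply: diag_eq => //; rewrite -E.
have sFA : F \subset A1 by case: fF => [[]].
have pkA' := pkA; rewrite eA in pkA' fF.
have lo' : forall q', isdiag i q' -> (q'.1 < k.+1)%N -> q' \notin F.
  move=> q' dq'; rewrite ltnS leq_eqVlt => /orP [/eqP e|lt].
    by rewrite (diag_eq dq' dpk e).
  by apply: contra (lo q' dq' lt); apply: (subsetP sFA).
have hi' : forall q', isdiag i q' -> (k.+1 <= q'.1)%N -> q' \in setX Rs Cs ->
    q'.1 != pk.1 /\ q'.2 != pk.2.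
  move=> [a b] /andP [/eqP e _] /= lt _; split; apply/eqP => /(congr1 val) /= E.
    by move: lt; rewrite E ltnn.
  by move: lt; rewrite e E ltnn.
have [FE|FE] := GL pkA' fF xF.
  apply: (IH (Rs :\ pk.1) Cs k.+1 FE lo') => // q' dq' lt.
  have := hi q' dq' (ltnW lt); rewrite eA => H; have [h1 _] := hi' q' dq' lt H.
  by move: H; case: q' dq' lt h1 => a b _ _ h1; rewrite FE !in_setX in_setD1 h1.
apply: (IH Rs (Cs :\ pk.2) k.+1 FE lo') => // q' dq' lt.
have := hi q' dq' (ltnW lt); rewrite eA => H; have [_ h2] := hi' q' dq' lt H.
by move: H; case: q' dq' lt h2 => a b _ _ h2; rewrite FE !in_setX in_setD1 h2.
Qed.

Lemma setXTT : setX [set: 'I_m] [set: 'I_n] = [set: 'I_m * 'I_n].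
Proof. by apply/setP => [[a b]]; rewrite in_setX !inE. Qed.

Lemma part1 p : isdiag i p -> cone_point (revlex_Pmn R ord) p.
Proof.
move=> dp.
have all : forall G, revlex_Pmn R ord G -> p \in G.
  move=> G HG; apply: (cone HG (Rs := setT) (Cs := setT) (k := 0)) => //.
  all: try by rewrite setXTT. all: try by move=> q' _ _; rewrite inE.
split => //.
have [G HG] := exists_revlex R ord (leqnn (#|[set: 'I_m]| + #|[set: 'I_n]|)).
rewrite setXTT in HG; exists G => //; exact: all.
Qed.

End P.


Section P.
Variables (R : realType) (m n : nat) (ord : 'I_m * 'I_n -> nat).
Hypothesis hmn : (m <= n)%N.
Hypothesis hm : (1 < m)%N.
Hypothesis Hdd : forall p q, isdiag m p -> isdiag m q -> (p.1 < q.1)%N -> (ord p < ord q)%N.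
Hypothesis Hdn : forall p q, isdiag m p -> ~~ isdiag m q -> (ord p < ord q)%N.
Variables (a0 : 'I_m) (b0 : 'I_n).
Hypothesis hab : (a0 : nat) != b0.
Local Notation pt := (@Pmn R m n).

Definition Rk k := [set r : 'I_m | ((r : nat) != a0) || (k <= a0)%N].
Definition Ck k := [set c : 'I_n | (k <= c)%N || ((c : nat) == a0)].

Lemma chain j : (j <= m)%N ->
  exists G, revlex pt ord (setX (Rk (m - j)) (Ck (m - j))) G /\ (a0, b0) \notin G.
Proof.
elim: j => [|j IH] hj.
  rewrite subn0.
  have [G HG] := exists_revlex R ord (leqnn (#|Rk m| + #|Ck m|)).
  exists G; split => //; apply/negP => H.
  by have := subsetP (revlex_sub HG) _ H; rewrite in_setX inE eqxx /= leqNgt ltn_ord.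
have [G' [HG' nG']] := IH (ltnW hj).
set k := (m - j.+1)%N.
have ek : (m - j)%N = k.+1 by rewrite /k subnSK.
rewrite ek in HG'.
have km : (k < m)%N by rewrite /k; lia.
have kn : (k < n)%N by apply: leq_trans hmn.
pose pk : 'I_m * 'I_n := (Ordinal km, Ordinal kn).
have dpk : isdiag m pk by rewrite /isdiag /= eqxx km.
have pkA : pk \in setX (Rk k) (Ck k).
  by rewrite in_setX !inE /= leqnn andbT; case: eqVneq => //= ->.
have pkmin : forall y, y \in setX (Rk k) (Ck k) -> (ord pk <= ord y)%N.
  move=> [a b]; rewrite in_setX !inE => /andP [Ha Hb].
  case dy: (isdiag m (a, b)); last by apply: ltnW; apply: Hdn; rewrite ?dy.
  have eab : (a : nat) = b by move: dy => /andP [/eqP].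
  have ka : (k <= a)%N.
    move: Hb => /orP [|/eqP E]; first by rewrite eab.
    by move: Ha; rewrite eab E eqxx.
  move: ka; rewrite leq_eqVlt => /orP [/eqP E|lt].
    by rewrite (diag_eq dy dpk) //= E.
  by apply: ltnW; apply: Hdd.
have npk : (a0, b0) != pk.
  apply/negP => /eqP [] /(congr1 val) /= E1 /(congr1 val) /= E2.
  by move: hab; rewrite E1 E2 eqxx.
case: (eqVneq (k : nat) a0) => [ka|ka].
  have FE : setX (Rk k :\ pk.1) (Ck k) = setX (Rk k.+1) (Ck k.+1).
    congr setX; apply/setP => r; rewrite ?in_setD1 !inE /= -?ka.
      by rewrite ltnn leqnn orbF orbT andbT.
    by case: (ltngtP k r).
  have r'm : ((k == 0%N) < m)%N by case: (k == 0%N) => //; apply: ltnW.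
  pose r' : 'I_m := Ordinal r'm.
  have Hf : is_facet pt (setX (Rk k) (Ck k)) (setX (Rk k :\ pk.1) (Ck k)).
    apply: (@facet_row R m n (Rk k) (Ck k) pk.1 r' pk.2).
    - by move: pkA; rewrite in_setX => /andP [].
    - by rewrite inE -ka leqnn orbT.
    - by apply/eqP => /(congr1 val) /=; case: eqVneq => [->|nk0] //= E; move: nk0; rewrite -E.
    - by move: pkA; rewrite in_setX => /andP [].
  exists (pk |: G'); split; last by rewrite in_setU1 negb_or npk.
  apply: (revlex_cons (F := setX (Rk k :\ pk.1) (Ck k))) => //.
  - by rewrite in_setX in_setD1 eqxx.
  - by rewrite FE.
have FE : setX (Rk k) (Ck k :\ pk.2) = setX (Rk k.+1) (Ck k.+1).
  congr setX; apply/setP => r; rewrite ?in_setD1 !inE /=.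
    by case: eqVneq => //= _; rewrite ltn_neqAle ka.
  have -> : (r != pk.2) = ((r : nat) != k) by [].
  case: (ltngtP k r) => //= E.
  by rewrite -E (negbTE ka).
have a0n : (a0 < n)%N by apply: leq_trans hmn.
pose c' : 'I_n := Ordinal a0n.
have Hf : is_facet pt (setX (Rk k) (Ck k)) (setX (Rk k) (Ck k :\ pk.2)).
  apply: (@facet_col R m n (Rk k) (Ck k) pk.2 c' pk.1).
  - by move: pkA; rewrite in_setX => /andP [].
  - by rewrite inE eqxx orbT.
  - by apply/eqP => /(congr1 val) /= E; move: ka; rewrite E eqxx.
  - by move: pkA; rewrite in_setX => /andP [].
exists (pk |: G'); split; last by rewrite in_setU1 negb_or npk.
apply: (revlex_cons (F := setX (Rk k) (Ck k :\ pk.2))) => //.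
- by rewrite in_setX in_setD1 eqxx andbF.
- by rewrite FE.
Qed.

Lemma chain_full : exists G, revlex_Pmn R ord G /\ (a0, b0) \notin G.
Proof.
have [G [HG nG]] := chain (leqnn m); exists G; split => //.
rewrite subnn in HG; move: HG; rewrite /revlex_Pmn.
have -> : setX (Rk 0) (Ck 0) = [set: 'I_m * 'I_n] by apply/setP => [[a b]]; rewrite in_setX !inE !orbT.
by [].
Qed.

End P.


Close Scope ring_scope.

Theorem lemma4p12 (R : realType) (m n i : nat) (ord : 'I_m * 'I_n -> nat) :
  (i <= m)%N -> (m <= n)%N ->
  injective ord ->
  (forall p q, isdiag i p -> isdiag i q -> (p.1 < q.1)%N -> (ord p < ord q)%N) ->
  (forall p q, isdiag i p -> ~~ isdiag i q -> (ord p < ord q)%N) ->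
  (forall p, isdiag i p -> cone_point (revlex_Pmn R ord) p) /\
  (i = m -> (1 < m)%N ->
   forall t, core (revlex_Pmn R ord) t <->
             delete (revlex_Pmn R ord) [set p | isdiag i p] t).
Proof.
move=> him hmn _ Hdd Hdn.
have P1 : forall p, isdiag i p -> cone_point (revlex_Pmn R ord) p.
  by move=> p dp; apply: (part1 R him hmn Hdd Hdn dp).
split => // ei hm t; subst i; split.
  move=> [fc H]; split => //; apply/pred0P => v /=.
  case vt: (v \in t) => //=; rewrite inE; case dv: (isdiag m v) => //.
  by have [_ nc] := H v vt; exfalso; apply: nc; apply: P1.
move=> [fc dj]; split => // v vt; split.
  by case: fc => s Ds ts; exists s => //; apply: (subsetP ts).
move=> [_ cp].
have ndv : ~~ isdiag m v.
  by have := disjointFr dj vt; rewrite inE => ->.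
case: v vt cp ndv => a0 b0 vt cp ndv.
have hab : (a0 : nat) != b0 by move: ndv; rewrite /isdiag /= ltn_ord andbT.
have [G [HG nG]] := chain_full R hmn hm Hdd Hdn hab.
by move: nG; rewrite cp.
Qed.
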